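(* Let $q\in\mathbb{C}$, let $c_i(q,\pi)\in\mathbb{C}$ ($p\ge1$, $1\le i\le p$, $\pi\in\mathfrak{S}_p$) be coefficients, and for $p\ge1$ let $$\mathcal{E}_p=\sum_{k_1,\ldots,k_p}\sum_{\pi\in\mathfrak{S}_p}\sum_{i=1}^p c_i(q,\pi)\,E(k_{\pi(i)})\,a^\dagger(k_{\pi(p)})\cdots a^\dagger(k_{\pi(1)})\,a(k_1)\cdots a(k_p),$$ and $$R_p(q,X)=\alpha_p\sum_{\pi\in\mathfrak{S}_p}\sum_{i=1}^p c_i(q,\pi)X^{i-1}\pi\in\mathbb{C}[X][\mathfrak{S}_p].$$ Then for every $n$-particle state $K$ (an ordered $n$-tuple of distinct momenta) and every $1\le p\le n$, $$\mathcal{E}_pK=\xi\Bigl(X^{n-p}\sum_{J\subset K,\ |J|=p}q^{I_K\left((K-J)\sqcup J\right)}\,(K-J)\sqcup R_p(q,X)J\Bigr).$$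
   Context: Operators $a(k)$, indexed by momenta $k$, with adjoints $a^\dagger(k)$, satisfy $a(k)a^\dagger(\ell)-q\,a^\dagger(\ell)a(k)=\delta_{k,\ell}$ and $a(k)|0\rangle=0$. An ordered set $K=[k_1,\dots,k_n]$ of pairwise distinct momenta is identified with the state $a^\dagger(k_n)\cdots a^\dagger(k_1)|0\rangle$, and formal linear combinations of such ordered sets with the corresponding linear combinations of states. $E(k)$ is the single-particle energy of momentum $k$. For $\pi\in\mathfrak{S}_n$, $I(\pi)$ is the number of inversions (pairs $i<j$ with $\pi(i)>\pi(j)$); $\alpha_p=\sum_{\rho\in\mathfrak{S}_p}q^{I(\rho)}\rho\in\mathbb{C}[\mathfrak{S}_p]$. The group $\mathfrak{S}_n$ acts on ordered $n$-element sets by permuting positions, extended linearly to the group algebra and to polynomials in $X$ (with $X$ commuting). For an ordered set $A$ and $\sigma\in\mathfrak{S}_n$, $I_A(\sigma A):=I(\sigma)$. A subset $J\subset K$ carries the order induced from $K$; $K-J$ is the complement with induced order; for disjoint ordered sets $A_1,A_2$, $A_1\sqcup A_2$ is the ordered set listing the elements of $A_1$ (in order) followed by those of $A_2$ (in order), extended bilinearly (and with powers of $X$ carried along) to linear combinations. The evaluation map $\xi$ is the linear map on polynomials in $X$ with coefficients formal linear combinations of ordered $n$-sets defined by $\xi(B\,X^{i-1})=E(B(i))\,B$, where $B(i)$ is the $i$-th element of the ordered set $B$. *)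

(* Defs.v *)
(* Complex numbers are modelled as [complex R] (= R[i]) for
   [R : realType] (the real numbers); all definitions below are generic over a
   commutative ring [C]. *)
From HB Require Import structures.
From mathcomp Require Import all_boot all_order all_algebra all_fingroup.
From mathcomp Require Export reals complex.
Import GRing.Theory.
Local Open Scope ring_scope.

Section Fock.
Variables (M : eqType) (C : comNzRingType) (q : C).

(* A vector of the (algebraic) q-Fock space: its coefficient on each word
   [k_1; ...; k_n], the word standing for a^dag(k_n) ... a^dag(k_1)|0>. *)
Definition state := seq M -> C.

Definition basis (K : seq M) : state := fun w => (w == K)%:R.

Definition adag (l : M) (f : state) : state := fun w =>
  match rev w with
  | y :: r => if y == l then f (rev r) else 0
  | [::] => 0
  end.

(* annihilation operator a(k), the unique action forced by
   a(k) a^dag(l) - q a^dag(l) a(k) = delta_{k,l} and a(k)|0> = 0: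
   a(k)[k_1..k_n] = sum_j q^(n-j) delta_{k,k_j} [k_1..^k_j..k_n]. *)
Definition annih (k : M) (f : state) : state := fun w =>
  \sum_(i < (size w).+1) q ^+ (size w - i) * f (take i w ++ k :: drop i w).

(* a^dag(x_p) ... a^dag(x_1) f  for s = [x_1; ..; x_p] *)
Definition adags (s : seq M) (f : state) : state := foldl (fun g x => adag x g) f s.
(* a(x_1) ... a(x_p) f  for s = [x_1; ..; x_p] *)
Definition annihs (s : seq M) (f : state) : state := foldr annih f s.

(* The operator E_p, with the momentum sums k_1..k_p running over a finite
   list S of (distinct) momenta. *)
Definition Eop (E : M -> C) (c : forall p : nat, 'I_p -> 'S_p -> C)
    (p : nat) (S : seq M) (f : state) : state := fun w =>
  \sum_(t : {ffun 'I_p -> 'I_(size S)})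
    let k := fun j : 'I_p => tnth (in_tuple S) (t j) in
    \sum_(pi : 'S_p) \sum_(i < p)
      c p i pi * E (k (pi i)) *
      adags [seq k (pi j) | j <- enum 'I_p] (annihs [seq k j | j <- enum 'I_p] f) w.

(* Polynomials in X whose coefficients are formal linear combinations of
   ordered sets: coefficient (a polynomial) of each word. *)
Definition pstate := seq M -> {poly C}.

Definition ninv (n : nat) (s : 'S_n) : nat :=
  #|[set ij : 'I_n * 'I_n | (ij.1 < ij.2)%N && (s ij.2 < s ij.1)%N]|.

Definition permute (n : nat) (s : 'S_n) (A : seq M) : seq M :=
  if A is x :: _ then [seq nth x A (s i) | i <- enum 'I_n] else [::].

(* I_A(sigma A) := I(sigma) *)
Definition Irel (A B : seq M) : nat :=
  match [pick s : 'S_(size A) | permute _ s A == B] with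
  | Some s => ninv _ s
  | None => 0
  end.

Definition galg (p : nat) := 'S_p -> {poly C}.

(* product in the group algebra; (rho pi)(x) = rho (pi x), i.e. the mathcomp
   product (pi * rho)%g *)
Definition gmul (p : nat) (f g : galg p) : galg p := fun s =>
  \sum_(rho : 'S_p) \sum_(pi : 'S_p)
    if (pi * rho)%g == s then f rho * g pi else 0.

Definition alpha (p : nat) : galg p := fun rho => (q ^+ ninv _ rho)%:P.

Definition Rp (c : forall p : nat, 'I_p -> 'S_p -> C) (p : nat) : galg p :=
  gmul p (alpha p) (fun pi => \sum_(i < p) (c p i pi)%:P * 'X^i).

Definition gact (p : nat) (r : galg p) (J : seq M) : pstate := fun w =>
  \sum_(s : 'S_p) if permute _ s J == w then r s else 0.

Definition catl (A : seq M) (F : pstate) : pstate := fun w =>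
  if take (size A) w == A then F (drop (size A) w) else 0.

(* evaluation map xi(B X^(i-1)) = E(B(i)) B (terms with i > |B| never occur
   below and are sent to 0) *)
Definition xi (E : M -> C) (F : pstate) : state := fun B =>
  \sum_(i < size B) (F B)`_i * E (tnth (in_tuple B) i).

(* J ranges over the p-element subsets of K, with induced orders *)
Definition subJ (K : seq M) (A : {set 'I_(size K)}) : seq M :=
  mask [seq i \in A | i <- enum 'I_(size K)] K.
Definition compJ (K : seq M) (A : {set 'I_(size K)}) : seq M :=
  mask [seq i \notin A | i <- enum 'I_(size K)] K.

Definition rhs_poly (c : forall p : nat, 'I_p -> 'S_p -> C) (K : seq M) (p : nat)
    : pstate := fun w =>
  'X^(size K - p) *
  \sum_(A : {set 'I_(size K)} | #|A| == p)
    (q ^+ Irel K (compJ _ A ++ subJ _ A))%:P *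
    catl (compJ _ A) (gact p (Rp c p) (subJ _ A)) w.

End Fock.

Arguments basis {M C}. Arguments adag {M C}. Arguments annih {M C}.
Arguments adags {M C}. Arguments annihs {M C}. Arguments Eop {M C}.
Arguments permute {M}. Arguments Irel {M}. Arguments gmul {C}. Arguments alpha {C}.
Arguments Rp {C}. Arguments gact {M C}. Arguments catl {M C}. Arguments xi {M C}.
Arguments subJ {M}. Arguments compJ {M}. Arguments rhs_poly {M C}.

(* Main.v *)
Require Import Defs.
From HB Require Import structures.
From mathcomp Require Import all_boot all_order all_algebra all_fingroup.
From mathcomp Require Import reals complex.
From mathcomp Require Import zify ring.
From Stdlib Require Import FunctionalExtensionality.
Local Open Scope ring_scope.

Module W1.
Local Open Scope nat_scope.

Fixpoint invsR (T : Type) (R : rel T) (s : seq T) : nat :=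
  if s is x :: s' then count (R x) s' + invsR T R s' else 0.
Arguments invsR {T}.

Lemma invsR_map (T1 T2 : Type) (R : rel T2) (f : T1 -> T2) s :
  invsR R (map f s) = invsR (fun a b => R (f a) (f b)) s.
Proof. by elim: s => //= x s ->; rewrite count_map. Qed.

Section Comb.
Variable T : eqType.

Lemma invsR_cat (R : rel T) (s1 s2 : seq T) : invsR R (s1 ++ s2) =
  invsR R s1 + invsR R s2 + \sum_(y <- s1) count (R y) s2.
Proof.
elim: s1 => [|x s1 IH] /=; first by rewrite big_nil addn0.
by rewrite IH count_cat big_cons; lia.
Qed.

Lemma eq_in_invsR (R1 R2 : rel T) (s : seq T) : {in s &, R1 =2 R2} -> invsR R1 s = invsR R2 s.
Proof.
elim: s => [|x s IH] //= H.
rewrite IH; last by move=> a b Ha Hb; apply: H; rewrite inE ?Ha ?Hb orbT.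
congr (_ + _); apply: eq_in_count => y Hy; apply: H; by rewrite inE ?Hy ?eqxx ?orbT.
Qed.

Lemma invsR_sum (R : rel T) (r : seq T) : uniq r ->
  invsR R r = \sum_(i <- r) \sum_(j <- r) ((index i r < index j r) && R i j).
Proof.
elim: r => [|x r IH] /=; first by rewrite big_nil.
move=> /andP[xr ur]; rewrite IH // big_cons big_cons /= eqxx /=.
rewrite add0n; congr (_ + _).
  rewrite -sum1_count big_mkcond /=.
  apply: eq_big_seq => j jr.
  by rewrite (negbTE (_ : x != j)) //; apply: contraNneq xr => ->.
apply: eq_big_seq => i ir; rewrite big_cons.
rewrite (negbTE (_ : x != i)) ?eqxx ?ltn0 ?add0n; last by apply: contraNneq xr => ->.
apply: eq_big_seq => j jr.
by rewrite (negbTE (_ : x != j)) //; apply: contraNneq xr => ->.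
Qed.

Definition ltK (K : seq T) x y := index x K < index y K.
Definition invs (K : seq T) (B : seq T) := invsR (fun x y => ltK K y x) B.

Lemma ltK_trans K : transitive (ltK K).
Proof. by move=> y x z; rewrite /ltK; apply: ltn_trans. Qed.

Lemma invs_sorted (K B : seq T) : sorted (ltK K) B -> invs K B = 0.
Proof.
elim: B => [|x B IH] //= Hp.
rewrite /invs /= -/(invs K B) IH ?(path_sorted Hp) // addn0.
have := order_path_min (@ltK_trans K) Hp.
move=> /allP H; apply/eqP; rewrite -leqn0 leqNgt -has_count; apply/hasP => [[y yB]].
by move: (H y yB); rewrite /ltK => h1 h2; have := ltn_trans h1 h2; rewrite ltnn.
Qed.

Lemma sorted_index (K : seq T) : uniq K -> sorted (ltK K) K.
Proof.
move=> uK; rewrite sorted_pairwise; last exact: ltK_trans.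
case: K uK => [//|x0 K'] uK.
apply/(pairwiseP x0) => i j Hi Hj Hij.
by rewrite /ltK !index_uniq.
Qed.

Lemma sorted_filterK (K : seq T) (P : pred T) : uniq K -> sorted (ltK K) (filter P K).
Proof. by move=> uK; apply: sorted_filter; [exact: ltK_trans|exact: sorted_index]. Qed.

Lemma ltK_nth (K B : seq T) (y : T) i j : sorted (ltK K) B -> i < size B -> j < size B ->
  ltK K (nth y B i) (nth y B j) = (i < j).
Proof.
move=> sB Hi Hj.
have pB : pairwise (ltK K) B by rewrite -sorted_pairwise //; exact: ltK_trans.
case: (ltngtP i j) => Hij.
- by move/(pairwiseP y): pB => /(_ i j Hi Hj Hij).
- move/(pairwiseP y): pB => /(_ j i Hj Hi Hij).
  by rewrite /ltK => h; apply/negbTE; rewrite -leqNgt ltnW.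
- by rewrite Hij /ltK ltnn.
Qed.

Lemma count_iota_gt i n : count (fun j => i < j) (iota 0 n) = n - i.+1.
Proof.
elim: n => [//|n IH]; rewrite -[n.+1]addn1 iotaD count_cat IH /= add0n addn0.
case: (ltnP i n) => H; lia.
Qed.

Lemma count_after (K B : seq T) (x : T) : sorted (ltK K) B -> x \in B ->
  count (ltK K x) B = size B - (index x B).+1.
Proof.
move=> sB xB.
rewrite -{1}(mkseq_nth x B) /mkseq count_map -count_iota_gt.
apply: eq_in_count => j; rewrite mem_iota add0n /= => Hj.
by rewrite -{1}(nth_index x xB) ltK_nth // index_mem.
Qed.

Lemma ltK_filter (K : seq T) (P : pred T) (x y : T) : uniq K -> x \in filter P K -> y \in filter P K ->
  ltK (filter P K) x y = ltK K x y.
Proof.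
move=> uK xB yB.
have sB := @sorted_filterK K P uK.
rewrite -(nth_index x xB) -(nth_index x yB) [RHS](ltK_nth K _ x _ _ sB) ?index_mem //.
by rewrite /ltK !index_uniq ?index_mem ?filter_uniq.
Qed.

End Comb.
Arguments ltK {T}. Arguments invs {T}. Arguments invs_sorted {T}. Arguments sorted_index {T}.
Arguments sorted_filterK {T}. Arguments ltK_nth {T}. Arguments count_after {T}. Arguments ltK_filter {T}.
Arguments ltK_trans {T}. Arguments invsR_cat {T}. Arguments eq_in_invsR {T}. Arguments invsR_sum {T}.

Section Comb2.
Variable T : eqType.

Lemma invs_cat (K C D : seq T) : invs K (C ++ D) =
  invs K C + invs K D + \sum_(y <- C) count (fun z => ltK K z y) D.
Proof. by rewrite /invs invsR_cat. Qed.

Lemma invs_annih_step (K s : seq T) (x : T) : uniq K ->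
  let L := filter (predC (mem s)) K in x \in L ->
  invs K (rem x L ++ x :: s) = invs K (L ++ s) + (size L - (index x L).+1).
Proof.
move=> uK L xL.
have sL : sorted (ltK K) L by apply: sorted_filterK.
have uL : uniq L by rewrite filter_uniq.
have sR : sorted (ltK K) (rem x L).
  by rewrite rem_filter //; apply: sorted_filter => //; exact: ltK_trans.
rewrite !invs_cat (invs_sorted K _ sR) (invs_sorted K _ sL) !add0n.
rewrite (perm_big _ (perm_to_rem xL)) big_cons.
rewrite /invs /= -/(invs K s).
have -> : \sum_(y <- rem x L) count (fun z => ltK K z y) (x :: s) =
   count (ltK K x) (rem x L) + \sum_(y <- rem x L) count (fun z => ltK K z y) s.
  rewrite /= big_split /=; congr (_ + _).
  by rewrite -sum1_count [RHS]big_mkcond; apply: eq_bigr => y _; case: (ltK K x y).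
have -> : count (ltK K x) (rem x L) = count (ltK K x) L.
  by rewrite (seq.permP (perm_to_rem xL)) /= /ltK ltnn.
rewrite count_after //; lia.
Qed.

Lemma invs_split (K s : seq T) : uniq K -> uniq s -> {subset s <= K} ->
  let L := filter (predC (mem s)) K in let J := filter (mem s) K in
  invs K (L ++ s) = invs K (L ++ J) + invs J s.
Proof.
move=> uK us sK L J.
have pJ : perm_eq s J.
  apply: uniq_perm; [exact: us|by rewrite filter_uniq|].
  move=> y; rewrite /J mem_filter /=; case yS: (y \in s) => //=; by rewrite sK.
rewrite !invs_cat (invs_sorted K _ (sorted_filterK K _ uK)) (invs_sorted K J (sorted_filterK K _ uK)).
rewrite !add0n.
have -> : \sum_(y <- L) count (fun z => ltK K z y) s = \sum_(y <- L) count (fun z => ltK K z y) J.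
  by apply: eq_bigr => y _; apply: (seq.permP pJ).
suff -> : invs K s = invs J s by lia.
apply: eq_in_invsR => a b Ha Hb /=.
rewrite (perm_mem pJ) in Ha; rewrite (perm_mem pJ) in Hb.
by rewrite ltK_filter.
Qed.

End Comb2.

End W1.
Import W1.

Module W2.
Local Open Scope nat_scope.

Section Perm.
Variable T : eqType.

Lemma permuteE n (s : 'S_n) (J : seq T) y : size J = n ->
  permute _ s J = [seq nth y J (s i) | i <- enum 'I_n].
Proof.
case: J => [|x J'] /= Hs.
  by subst n; case: (enum 'I_0) (size_enum_ord 0) => [|]. 
apply: eq_map => i; apply: set_nth_default; by rewrite /= Hs.
Qed.

Lemma size_permute n (s : 'S_n) (J : seq T) : size J = n -> size (permute _ s J) = n.
Proof.
case: J => [|x J'] Hs; first by rewrite /=.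
by rewrite (permuteE _ _ _ x Hs) size_map size_enum_ord.
Qed.

Lemma nth_permute n (s : 'S_n) (J : seq T) y (i : 'I_n) : size J = n ->
  nth y (permute _ s J) i = nth y J (s i).
Proof.
move=> Hs; rewrite (permuteE _ _ _ y Hs) (nth_map i) ?size_enum_ord //.
by rewrite nth_ord_enum.
Qed.

Lemma permute_eq_nth n (s : 'S_n) (J B : seq T) y : size J = n -> size B = n ->
  (forall i : 'I_n, nth y B i = nth y J (s i)) -> permute _ s J = B.
Proof.
move=> HJ HB H; apply: (@eq_from_nth _ y); first by rewrite size_permute.
move=> i; rewrite size_permute // => Hi.
by rewrite (_ : i = nat_of_ord (Ordinal Hi)) // nth_permute // H.
Qed.

Lemma permute_mul n (p r : 'S_n) (J : seq T) : size J = n ->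
  permute _ p (permute _ r J) = permute _ (p * r)%g J.
Proof.
case: J => [|y J'] HJ.
  by rewrite /=; case: n p r HJ => //.
apply: (@eq_from_nth _ y); first by rewrite !size_permute // size_permute.
move=> i; rewrite size_permute ?size_permute // => Hi.
by rewrite (_ : i = nat_of_ord (Ordinal Hi)) // !nth_permute ?size_permute // permM.
Qed.

Lemma perm_eq_permute n (s : 'S_n) (J : seq T) : size J = n -> perm_eq J (permute _ s J).
Proof.
case: J => [|y J'] HJ; first by [].
rewrite (permuteE _ _ _ y HJ).
have -> : [seq nth y (y :: J') (s i) | i <- enum 'I_n] =
   map (nth y (y :: J')) (map val (map s (enum 'I_n))) by rewrite -!map_comp.
have pe : perm_eq (map s (enum 'I_n)) (enum 'I_n).
  apply: uniq_perm.
  - by rewrite (map_inj_uniq (fun a b => @perm_inj _ s a b)) enum_uniq.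
  - exact: enum_uniq.
  by move=> i; rewrite mem_enum; apply/mapP; exists ((s^-1)%g i); rewrite ?mem_enum ?permKV.
rewrite perm_sym; apply: (perm_trans (perm_map _ (perm_map _ pe))).
by rewrite val_enum_ord -HJ -/(mkseq _ _) mkseq_nth.
Qed.

Lemma permute_inj n (s s' : 'S_n) (J : seq T) : uniq J -> size J = n ->
  permute _ s J = permute _ s' J -> s = s'.
Proof.
case: J => [|y J'] uJ HJ E.
  by subst n; apply/permP => -[].
apply/permP => i.
have := congr1 (fun B => nth y B i) E.
rewrite !nth_permute // => /eqP; rewrite nth_uniq ?HJ // => /eqP; exact: val_inj.
Qed.

Lemma exists_permute n (J B : seq T) : uniq J -> size J = n -> perm_eq J B ->
  exists s : 'S_n, permute _ s J = B.
Proof.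
move=> uJ HJ pJB.
case: J uJ HJ pJB => [|y J'] uJ HJ pJB.
  exists 1%g; rewrite /=; move: pJB; rewrite perm_sym => /perm_nilP -> //.
set J := y :: J' in uJ HJ pJB *.
have HB : size B = n by rewrite -(perm_size pJB).
have uB : uniq B by rewrite -(perm_uniq pJB).
have Hlt : forall i : 'I_n, index (nth y B i) J < n.
  by move=> i; rewrite -[X in _ < X]HJ index_mem (perm_mem pJB) mem_nth ?HB.
pose f (i : 'I_n) := Ordinal (Hlt i).
have finj : injective f.
  move=> i j /(congr1 val) /= /(congr1 (nth y J)).
  rewrite !nth_index ?(perm_mem pJB) ?mem_nth ?HB //.
  move/eqP; rewrite nth_uniq ?HB // => /eqP; exact: val_inj.
exists (perm finj); apply: permute_eq_nth => // i.
by rewrite permE /= nth_index // (perm_mem pJB) mem_nth ?HB.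
Qed.

Lemma ninv_invs n (s : 'S_n) (J : seq T) : uniq J -> size J = n ->
  ninv _ s = invs J (permute _ s J).
Proof.
case: J => [|y J'] uJ HJ.
  subst n; rewrite /ninv /=; apply/eqP; rewrite cards_eq0; apply/eqP/setP => -[[i ?] ?] //.
set J := y :: J' in uJ HJ *.
rewrite (permuteE _ _ _ y HJ) /invs invsR_map.
rewrite (eq_in_invsR _ (fun i j : 'I_n => s j < s i)); last first.
  by move=> i j _ _ /=; rewrite /ltK !index_uniq ?HJ.
rewrite invsR_sum ?enum_uniq // /ninv -sum1dep_card big_mkcond /=.
rewrite -(pair_bigA _ (fun i j : 'I_n => if (i < j) && (s j < s i) then 1 else 0)) /=.
rewrite [RHS]big_enum /=; apply: eq_big => // i _.
rewrite big_enum /=; apply: eq_big => // j _.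
by rewrite !index_enum_ord; case: (_ && _).
Qed.

End Perm.
Arguments permuteE {T n}. Arguments size_permute {T n}. Arguments nth_permute {T n}.
Arguments permute_eq_nth {T n}. Arguments permute_mul {T n}. Arguments perm_eq_permute {T n}.
Arguments permute_inj {T n}. Arguments exists_permute {T n}. Arguments ninv_invs {T n}.

End W2.
Import W2.

Module W3.
Local Open Scope nat_scope.
Import GRing.Theory.

Section Seqs.
Variable M : eqType.

Lemma insert_eq (L w : seq M) x i : uniq L -> i <= size w ->
  (take i w ++ x :: drop i w == L) = [&& x \in L, w == rem x L & i == index x L].
Proof.
move=> uL Hi; apply/eqP/and3P.
- move=> E; subst L.
  have Ht : size (take i w) = i by rewrite size_take_min; lia.
  have xn : x \notin take i w.
    by move: uL; rewrite cat_uniq => /and3P[_ /hasPn /(_ x) H _]; apply: H; rewrite inE eqxx.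
  have Hidx : index x (take i w ++ x :: drop i w) = i by rewrite index_cat (negbTE xn) /= eqxx Ht addn0.
  split; first by rewrite mem_cat inE eqxx orbT.
  + rewrite remE Hidx take_size_cat // drop_cat Ht.
    by rewrite ltnNge leqnSn /= subSnn /= drop0 cat_take_drop.
  + by rewrite Hidx.
- move=> [xL /eqP -> /eqP ->].
  have Hlt : index x L < size L by rewrite index_mem.
  rewrite remE take_size_cat ?size_take ?Hlt //.
  rewrite drop_size_cat ?size_take ?Hlt //.
  by rewrite -{2}(nth_index x xL) -drop_nth // cat_take_drop.
Qed.

Definition minusK (K s : seq M) := filter (predC (mem s)) K.
Definition good (K s : seq M) := uniq s && all (mem K) s.

Lemma minus_cons (K s : seq M) x : uniq K -> rem x (minusK K s) = minusK K (x :: s).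
Proof.
move=> uK; rewrite rem_filter ?filter_uniq // -filter_predI /minusK.
by apply: eq_filter => y /=; rewrite inE negb_or andbC.
Qed.

Lemma good_cons (K s : seq M) x : good K (x :: s) = (x \in minusK K s) && good K s.
Proof. by rewrite /good /= mem_filter /=; case: (x \in s); case: (x \in K); case: (uniq s). Qed.

End Seqs.
Arguments insert_eq {M}. Arguments minusK {M}. Arguments good {M}. Arguments minus_cons {M}. Arguments good_cons {M}.

Local Open Scope ring_scope.
Section Ops.
Variables (M : eqType) (C : comNzRingType) (q : C).

Lemma annih_basis (L : seq M) x a : uniq L ->
  annih q x (fun u => a * basis L u) =
  (fun u => (if x \in L then a * q ^+ (size L - (index x L).+1) else 0) * basis (rem x L) u).
Proof.
move=> uL; apply: functional_extensionality => w.
rewrite /annih /basis.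
under eq_bigr => i _ do rewrite (insert_eq L w x i uL (ltn_ord i)).
case xL: (x \in L); last by rewrite big1 ?mul0r // => i _; rewrite /= !mulr0.
case wE: (w == rem x L); last by rewrite big1 ?mulr0 // => i _; rewrite /= !mulr0.
move/eqP: wE => wE.
have Hsz : size w = (size L).-1 by rewrite wE size_rem.
have Hlt : (index x L < (size w).+1)%N.
  by rewrite Hsz; move: xL; rewrite -index_mem; case: (size L) => //.
rewrite (bigD1 (Ordinal Hlt)) //= eqxx big1 => [|j Hj]; last first.
  rewrite (_ : (nat_of_ord j == index x L) = false) ?mulr0 //.
  apply/negbTE; apply: contra Hj => /eqP E; apply/eqP; exact: val_inj.
rewrite addr0 !mulr1 mulrC; congr (_ * _); congr (_ ^+ _).
move: Hlt; rewrite Hsz; lia.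
Qed.


Lemma annihs_basis (K s : seq M) : uniq K ->
  annihs q s (basis K) =
  (fun u => (if good K s then q ^+ invs K (minusK K s ++ s) else 0) * basis (minusK K s) u).
Proof.
move=> uK; elim: s => [|x s IH].
  apply: functional_extensionality => u /=.
  have -> : minusK K [::] = K by rewrite /minusK; apply/all_filterP/allP.
  by rewrite cats0 (invs_sorted _ _ (sorted_index _ uK)) expr0 mul1r.
rewrite /= -/(annihs q s (basis K)) IH annih_basis ?filter_uniq //.
apply: functional_extensionality => u; rewrite minus_cons //; congr (_ * _).
rewrite good_cons; case xL: (x \in minusK K s) => //=; case: (good K s) => //=; last by rewrite mul0r.
by rewrite -exprD -(@invs_annih_step _ K s x uK xL) minus_cons.
Qed.

Lemma adag_basis (B : seq M) x (a : C) :
  adag x (fun u => a * basis B u) = (fun u => a * basis (rcons B x) u).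
Proof.
apply: functional_extensionality => w; rewrite /adag /basis.
case/lastP: w => [|r y] /=.
  by case: B => [|? ?]; rewrite /= mulr0.
rewrite rev_rcons revK eqseq_rcons.
by case: (y == x); rewrite ?andbT ?andbF ?mulr0.
Qed.

Lemma adags_basis (s B : seq M) (a : C) :
  adags s (fun u => a * basis B u) = (fun u => a * basis (B ++ s) u).
Proof.
elim: s B => [|x s IH] B; first by rewrite cats0.
by rewrite /adags /= -/(adags s _) adag_basis IH cat_rcons.
Qed.

End Ops.

End W3.
Import W3.

Module W4.
Local Open Scope nat_scope.
Import GRing.Theory.

Section SubJ.
Variables (M : eqType) (K : seq M) (y0 : M).
Hypothesis uK : uniq K.
Local Notation n := (size K).

Lemma maskE (P : pred 'I_n) :
  mask [seq P i | i : 'I_n <- enum 'I_n] K = [seq nth y0 K i | i : 'I_n <- enum 'I_n & P i].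
Proof.
have HK : [seq nth y0 K i | i : 'I_n <- enum 'I_n] = K.
  by rewrite (map_comp (nth y0 K) val) val_enum_ord -/(mkseq _ _) mkseq_nth.
by rewrite filter_mask map_mask HK.
Qed.

Lemma subJE (A : {set 'I_n}) : subJ K A = [seq nth y0 K i | i : 'I_n <- enum 'I_n & i \in A].
Proof. exact: maskE. Qed.

Lemma compJE (A : {set 'I_n}) : compJ K A = [seq nth y0 K i | i : 'I_n <- enum 'I_n & i \notin A].
Proof. exact: (maskE (fun i => i \notin A)). Qed.

Lemma nthK_inj : injective (fun i : 'I_n => nth y0 K i).
Proof. by move=> a b /eqP; rewrite nth_uniq // => /eqP; exact: val_inj. Qed.

Lemma mem_subJ (A : {set 'I_n}) (i : 'I_n) : (nth y0 K i \in subJ K A) = (i \in A).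
Proof. by rewrite subJE (mem_map nthK_inj) mem_filter mem_enum andbT. Qed.

Lemma subJ_filter (A : {set 'I_n}) : subJ K A = filter (mem (subJ K A)) K.
Proof. by apply/(subseq_uniqP uK); exact: mask_subseq. Qed.

Lemma compJ_filter (A : {set 'I_n}) : compJ K A = filter (predC (mem (subJ K A))) K.
Proof.
have HK : [seq nth y0 K i | i : 'I_n <- enum 'I_n] = K.
  by rewrite (map_comp (nth y0 K) val) val_enum_ord -/(mkseq _ _) mkseq_nth.
rewrite compJE -[X in _ = filter _ X]HK filter_map; congr map; apply: eq_filter => i /=.
by rewrite mem_subJ.
Qed.

Lemma size_subJ (A : {set 'I_n}) : size (subJ K A) = #|A|.
Proof.
rewrite subJE size_map size_filter.
by rewrite -sum1_count big_enum_cond /= sum1_card.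
Qed.

Lemma uniq_subJ (A : {set 'I_n}) : uniq (subJ K A).
Proof. exact: mask_uniq. Qed.

Lemma subJ_sub (A : {set 'I_n}) : {subset subJ K A <= K}.
Proof. by move=> x; apply: mem_mask. Qed.

Lemma perm_compJ (A : {set 'I_n}) : perm_eq K (compJ K A ++ subJ K A).
Proof.
rewrite compJ_filter {2}subJ_filter perm_sym perm_catC.
by rewrite (perm_filterC (mem (subJ K A)) K).
Qed.

Lemma size_compJ (A : {set 'I_n}) : size (compJ K A) = n - #|A|.
Proof. by rewrite -size_subJ (perm_size (perm_compJ A)) size_cat addnK. Qed.

End SubJ.

Lemma Irel_invs (M : eqType) (K B : seq M) : uniq K -> perm_eq K B -> Irel K B = invs K B.
Proof.
move=> uK pKB; rewrite /Irel; case: pickP => [s /eqP Hs | H0].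
  by rewrite (@ninv_invs _ _ s K uK erefl) Hs.
have [s Hs] := @exists_permute _ _ K B uK erefl pKB.
by move: (H0 s); rewrite Hs eqxx.
Qed.

Lemma cat_eq (M : eqType) (w C D : seq M) :
  (w == C ++ D) = (take (size C) w == C) && (drop (size C) w == D).
Proof.
apply/eqP/andP => [->|[/eqP H1 /eqP H2]].
  by rewrite take_size_cat // drop_size_cat.
by rewrite -H1 -H2 cat_take_drop.
Qed.
Arguments maskE {M K}. Arguments subJE {M K}. Arguments compJE {M K}. Arguments mem_subJ {M K}.
Arguments subJ_filter {M K}. Arguments compJ_filter {M K}. Arguments size_subJ {M K}.
Arguments uniq_subJ {M K}. Arguments subJ_sub {M K}. Arguments perm_compJ {M K}. Arguments size_compJ {M K}.
Arguments Irel_invs {M K B}. Arguments cat_eq {M}.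

End W4.
Import W4.

Module W5.
Local Open Scope nat_scope.
Import GRing.Theory.
Local Open Scope ring_scope.

Section Main.
Variables (M : eqType) (C : comNzRingType) (q : C) (E : M -> C)
  (c : forall p : nat, 'I_p -> 'S_p -> C) (K : seq M) (p : nat) (S : seq M)
  (y0 : M) (w : seq M).
Hypotheses (uK : uniq K) (uS : uniq S) (KS : {subset K <= S}) (Hp : (1 <= p <= size K)%N).
Local Notation n := (size K).

Definition H (s : seq M) : C := \sum_(pi : 'S_p) \sum_(i < p)
  c p i pi * E (nth y0 s (pi i)) * adags (permute _ pi s) (annihs q s (basis K)) w.

Lemma H_bad s : ~~ good K s -> H s = 0.
Proof.
move=> Hs; rewrite /H annihs_basis // (negbTE Hs).
by apply: big1 => pi _; apply: big1 => i _; rewrite adags_basis mul0r mulr0.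
Qed.

Lemma H_good s : good K s -> H s = \sum_(pi : 'S_p) \sum_(i < p)
  (if w == minusK K s ++ permute _ pi s then
     q ^+ invs K (minusK K s ++ s) * c p i pi * E (nth y0 s (pi i)) else 0).
Proof.
move=> Hs; rewrite /H annihs_basis // Hs.
apply: eq_bigr => pi _; apply: eq_bigr => i _; rewrite adags_basis /basis.
by case: eqP => _; rewrite ?mulr0 ?mulr1 // mulrC mulrA.
Qed.

Definition sk (t : {ffun 'I_p -> 'I_(size S)}) := [seq nth y0 S (t m) | m <- enum 'I_p].

Lemma size_sk t : size (sk t) = p.
Proof. by rewrite size_map size_enum_ord. Qed.

Lemma nth_sk t (j : 'I_p) : nth y0 (sk t) j = nth y0 S (t j).
Proof. by rewrite (nth_map j) ?size_enum_ord // nth_ord_enum. Qed.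

Lemma LHS_eq : Eop q E c p S (basis K) w = \sum_(t : {ffun 'I_p -> 'I_(size S)}) H (sk t).
Proof.
rewrite /Eop; apply: eq_bigr => t _ /=; apply: eq_bigr => pi _; apply: eq_bigr => i _.
rewrite !(tnth_nth y0) /= -/(sk t) nth_sk.
rewrite (permuteE _ _ y0 (size_sk t)).
congr (_ * _ * adags _ _ _).
by apply: eq_map => j; rewrite nth_sk (tnth_nth y0).
by congr annihs; apply: eq_map => j; rewrite (tnth_nth y0).
Qed.


Lemma catl_gact (A : {set 'I_n}) : catl (compJ K A) (Defs.gact p (Rp q c p) (subJ K A)) w =
  \sum_(rho : 'S_p) \sum_(pi : 'S_p)
    (if w == compJ K A ++ permute _ (pi * rho)%g (subJ K A)
     then (q ^+ ninv _ rho)%:P * \sum_(i < p) (c p i pi)%:P * 'X^i else 0).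
Proof.
rewrite /catl /Defs.gact /Rp /gmul /alpha.
case Ht: (take (size (compJ K A)) w == compJ K A); last first.
  by rewrite big1 // => rho _; rewrite big1 // => pi _; rewrite cat_eq Ht.
rewrite (eq_bigr (fun s => \sum_(rho : 'S_p) \sum_(pi : 'S_p)
   (if permute _ s (subJ K A) == drop (size (compJ K A)) w then
    (if (pi * rho)%g == s then (q ^+ ninv _ rho)%:P * \sum_(i < p) (c p i pi)%:P * 'X^i else 0)
    else 0))); last first.
  move=> s _; case: ifP => _ //.
  by rewrite big1 // => rho _; rewrite big1.
rewrite exchange_big /=; apply: eq_bigr => rho _.
rewrite exchange_big /=; apply: eq_bigr => pi _.
rewrite (bigD1 (pi * rho)%g) //= eqxx.
rewrite [X in _ + X]big1 => [|s Hs]; last first.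
  have -> : ((pi * rho)%g == s) = false by apply/negbTE; rewrite eq_sym.
  by case: ifP.
by rewrite addr0 cat_eq Ht /= eq_sym.
Qed.


Lemma rhs_poly_eq : rhs_poly q c K p w =
  \sum_(d : {set 'I_n} * 'S_p | #|d.1| == p) \sum_(pi : 'S_p)
   (if w == compJ K d.1 ++ permute _ (pi * d.2)%g (subJ K d.1) then
      \sum_(i < p) ((q ^+ (Irel K (compJ K d.1 ++ subJ K d.1) + ninv _ d.2) * c p i pi)%:P
                    * 'X^(n - p + i)) else 0).
Proof.
rewrite /rhs_poly big_distrr /=.
rewrite (eq_bigr (fun A => \sum_(rho : 'S_p) \sum_(pi : 'S_p)
   (if w == compJ K A ++ permute _ (pi * rho)%g (subJ K A) then
      \sum_(i < p) ((q ^+ (Irel K (compJ K A ++ subJ K A) + ninv _ rho) * c p i pi)%:P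
                    * 'X^(n - p + i)) else 0))); last first.
  move=> A _; rewrite catl_gact !big_distrr; apply: eq_bigr => rho _.
  rewrite !big_distrr; apply: eq_bigr => pi _ /=.
  case: ifP => _; last by rewrite !mulr0.
  rewrite !big_distrr; apply: eq_bigr => i _ /=.
  rewrite exprD !polyCM exprD.
  by rewrite -!mulrA mulrCA; congr (_ * _); rewrite mulrCA; congr (_ * _); rewrite mulrCA.
rewrite pair_big_dep; apply: eq_bigl => d; by rewrite andbT.
Qed.


Lemma xi_term (m d : nat) (a : 'I_p -> C) (f : nat -> C) : (d + p <= m)%N ->
  \sum_(i' < m) (\sum_(i < p) (a i)%:P * 'X^(d + i))`_i' * f i' = \sum_(i < p) a i * f (d + i).
Proof.
move=> Hm.
under eq_bigr => i' _ do rewrite coef_sum mulr_suml.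
rewrite exchange_big /=; apply: eq_bigr => i _.
have Hlt : (d + i < m)%N by move: (ltn_ord i) Hm; lia.
rewrite (bigD1 (Ordinal Hlt)) //= coefCM coefXn eqxx mulr1 big1 ?addr0 // => j Hj.
rewrite coefCM coefXn (_ : (nat_of_ord j == d + i)%N = false) ?mulr0 ?mul0r //.
by apply/negbTE; apply: contra Hj => /eqP E'; apply/eqP; exact: val_inj.
Qed.

Lemma facts (A : {set 'I_n}) (rho : 'S_p) : #|A| = p ->
  let J := subJ K A in let s := permute _ rho J in
  [/\ good K s, minusK K s = compJ K A,
      invs K (minusK K s ++ s) = (Irel K (compJ K A ++ J) + ninv _ rho)%N,
      size J = p & perm_eq J s].
Proof.
move=> HA J s.
have HJ : size J = p by rewrite /J (size_subJ y0).
have pJ : perm_eq J s by apply: perm_eq_permute.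
have uJ : uniq J by apply: (uniq_subJ uK).
have gs : good K s.
  rewrite /good -(perm_uniq pJ) uJ /=; apply/allP => x; rewrite -(perm_mem pJ).
  exact: (subJ_sub A).
have ms : minusK K s = compJ K A.
  rewrite (compJ_filter y0 uK) /minusK; apply: eq_filter => x /=.
  by rewrite (perm_mem pJ).
split => //.
move/andP: gs => [us /allP sK].
rewrite (@invs_split _ K s uK us sK).
have -> : filter (mem s) K = J.
  have HJf : J = filter (mem J) K by exact: (subJ_filter uK A).
  rewrite [RHS]HJf; apply: eq_filter => x /=; by rewrite (perm_mem pJ).
rewrite -/(minusK K s) ms Irel_invs //; last exact: (perm_compJ y0 uK A).
by rewrite (ninv_invs rho J uJ HJ).
Qed.


Lemma RHS_eq : xi E (rhs_poly q c K p) w =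
  \sum_(d : {set 'I_n} * 'S_p | #|d.1| == p) H (permute _ d.2 (subJ K d.1)).
Proof.
rewrite /xi rhs_poly_eq.
under eq_bigr => i' _ do rewrite coef_sum mulr_suml.
rewrite exchange_big /=; apply: eq_bigr => -[A rho] /= /eqP HA.
have [gs ms ex HJ pJ] := facts A rho HA.
rewrite ms in ex.
rewrite H_good //.
under eq_bigr => i' _ do rewrite coef_sum mulr_suml.
rewrite exchange_big /=; apply: eq_bigr => pi _.
rewrite ms (permute_mul pi rho _ HJ).
case: eqP => Hw; last first.
  rewrite [LHS]big1 => [|i' _]; last by rewrite coef0 mul0r.
  by rewrite big1.
rewrite (eq_bigr (fun i' : 'I_(size w) => (\sum_(i < p) ((q ^+ (Irel K (compJ K A ++ subJ K A) + ninv p rho) * c p i pi)%:P * 'X^(n - p + i)))`_i' * E (nth y0 w i'))); last first.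
  by move=> i' _; rewrite (tnth_nth y0).
have Hsz : size w = (n - p + p)%N.
  by rewrite Hw size_cat (size_compJ y0 uK) HA (size_permute _ _ HJ).
rewrite (xi_term _ _ _ (fun i => E (nth y0 w i))) ?Hsz //.
apply: eq_bigr => i _; rewrite ex; congr (_ * E _).
rewrite Hw nth_cat (size_compJ y0 uK) HA ltnNge leq_addr /= addKn.
by rewrite (nth_permute _ _ _ i HJ) permM (nth_permute _ _ _ (pi i) HJ).
Qed.


Lemma reindex_main : \sum_(t : {ffun 'I_p -> 'I_(size S)}) H (sk t) =
  \sum_(d : {set 'I_n} * 'S_p | #|d.1| == p) H (permute _ d.2 (subJ K d.1)).
Proof.
pose LL := [seq sk t | t <- index_enum {ffun 'I_p -> 'I_(size S)} & good K (sk t)].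
pose hh (d : {set 'I_n} * 'S_p) := permute _ d.2 (subJ K d.1).
pose LR := [seq hh d | d : {set 'I_n} * {perm 'I_p} <- index_enum (prod {set 'I_n} {perm 'I_p}) & #|d.1| == p].
have L1 : \sum_(t : {ffun 'I_p -> 'I_(size S)}) H (sk t) = \sum_(s <- LL) H s.
  rewrite big_map big_filter [RHS]big_mkcond /=; apply: eq_bigr => t _.
  by case: ifP => // /negbT; exact: H_bad.
have L2 : \sum_(d : {set 'I_n} * 'S_p | #|d.1| == p) H (hh d) = \sum_(s <- LR) H s.
  by rewrite big_map big_filter.
rewrite L1 L2; apply: perm_big; apply: uniq_perm.
- rewrite map_inj_uniq ?filter_uniq ?index_enum_uniq //.
  move=> t t' Et; apply/ffunP => m; apply: val_inj.
  have := congr1 (fun s => nth y0 s m) Et; rewrite /= !nth_sk => /eqP.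
  by rewrite nth_uniq // => /eqP.
- rewrite map_inj_in_uniq ?filter_uniq ?index_enum_uniq //.
  move=> [A rho] [A' rho']; rewrite !mem_filter /= => /andP[/eqP HA _] /andP[/eqP HA' _] Ed.
  rewrite /hh /= in Ed.
  have [_ _ _ HJ pJ] := facts A rho HA.
  have [_ _ _ HJ' pJ'] := facts A' rho' HA'.
  have AA : A = A'.
    apply/setP => i; rewrite -(mem_subJ y0 uK A) -(mem_subJ y0 uK A').
    by rewrite (perm_mem pJ) (perm_mem pJ') /= Ed.
  subst A'; congr pair.
  exact: (permute_inj rho rho' (subJ K A) (uniq_subJ uK A) HJ Ed).
move=> s; transitivity (good K s && (size s == p)).
  apply/mapP/andP => [[t]|[gs /eqP Hs]].
    by rewrite mem_filter => /andP[gt _] ->; rewrite gt size_sk.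
  have Ht : forall m : 'I_p, (index (nth y0 s m) S < size S)%N.
    move=> m; rewrite index_mem; apply: KS.
    move/andP: gs => [_ /allP]; apply; by rewrite mem_nth // Hs.
  pose t := [ffun m => Ordinal (Ht m)].
  have Hsk : sk t = s.
    apply: (@eq_from_nth _ y0); first by rewrite size_sk Hs.
    move=> j; rewrite size_sk => Hj.
    have jS : nth y0 s j \in S.
      apply: KS; move/andP: gs => [_ /allP]; apply; by rewrite mem_nth // Hs.
    by have := nth_sk t (Ordinal Hj); rewrite /= ffunE /= nth_index // => ->.
  by exists t; rewrite // mem_filter Hsk gs mem_index_enum.
symmetry; apply/mapP/andP => [[[A rho]]|[gs /eqP Hs]].
  rewrite mem_filter /= => /andP[/eqP HA _] ->.
  have [gs _ _ HJ pJ] := facts A rho HA.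
  by rewrite gs /hh /= (size_permute _ _ HJ).
pose A := [set i : 'I_n | nth y0 K i \in s].
have sK : {subset s <= K} by move/andP: gs => [_ /allP].
have HJ : subJ K A = filter (mem s) K.
  rewrite (subJ_filter uK A); apply: eq_in_filter => x xK.
  have Hi : (index x K < n)%N by rewrite index_mem.
  move: (mem_subJ y0 uK A (Ordinal Hi)); rewrite /= inE /= !nth_index // => ->.
have pJs : perm_eq (filter (mem s) K) s.
  apply: uniq_perm; first by rewrite filter_uniq.
    by move/andP: gs => [].
  by move=> x; rewrite mem_filter /=; case xs: (x \in s) => //=; rewrite sK.
have HA : #|A| = p by rewrite -(size_subJ y0 A) HJ (perm_size pJs) Hs.
have HszJ : size (subJ K A) = p by rewrite (size_subJ y0 A).
have pJ' : perm_eq (subJ K A) s by rewrite HJ.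
have [rho Hrho] := exists_permute (subJ K A) s (uniq_subJ uK A) HszJ pJ'.
exists (A, rho); last by rewrite /hh /= Hrho.
by rewrite mem_filter /= HA eqxx mem_index_enum.
Qed.


Lemma main_sec : Eop q E c p S (basis K) w = xi E (rhs_poly q c K p) w.
Proof. by rewrite LHS_eq RHS_eq reindex_main. Qed.

End Main.

Theorem main_gen (M : eqType) (C : comNzRingType) (q : C) (E : M -> C)
    (c : forall p : nat, 'I_p -> 'S_p -> C)
    (K : seq M) (p : nat) (S : seq M) :
  uniq K -> uniq S -> {subset K <= S} -> (1 <= p <= size K)%N ->
  forall w : seq M,
    Eop q E c p S (basis K) w = xi E (rhs_poly q c K p) w.
Proof.
move=> uK uS KS Hp w.
case: K uK KS Hp => [|y0 K'] uK KS Hp; first by move: Hp; case: p.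
exact: (@main_sec M C q E c (y0 :: K') p S y0 w uK uS KS Hp).
Qed.

End W5.
Import W5.


Theorem proposition1 (R : realType) (M : eqType) (q : complex R) (E : M -> complex R)
    (c : forall p : nat, 'I_p -> 'S_p -> complex R)
    (K : seq M) (p : nat) (S : seq M) :
  uniq K -> uniq S -> {subset K <= S} -> (1 <= p <= size K)%N ->
  forall w : seq M,
    Eop q E c p S (basis K) w = xi E (rhs_poly q c K p) w.
Proof. exact: main_gen. Qed.
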